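(* Let $\mathcal{H}_A,\mathcal{H}_B$ be finite-dimensional Hilbert spaces with fixed reference bases $\{|i\rangle_A\}$ and $\{|j\rangle_B\}$, and equip $\mathcal{H}_A\otimes\mathcal{H}_B$ with the product reference basis. For every state $\rho_{AB}$ with reduced states $\rho_A,\rho_B$, $$C^{A|B}_a(\rho_{AB})\leq C_a(\rho_A)+E_a(\rho_{AB}),\qquad C_a(\rho_{AB})\leq C^{A|B}_a(\rho_{AB})+C_a(\rho_B),$$ $$C_a(\rho_{AB})\leq C_a(\rho_A)+C_a(\rho_B)+E_a(\rho_{AB}).$$
   Context: $S$ denotes von Neumann entropy. For a system with reference basis $\{|k\rangle\}$, $\Delta(\rho)=\sum_k|k\rangle\langle k|\rho|k\rangle\langle k|$. The coherence of assistance is $C_a(\rho)=\max\sum_ip_iS(\Delta(|\psi_i\rangle\langle\psi_i|))$, the maximum over all pure-state decompositions $\rho=\sum_ip_i|\psi_i\rangle\langle\psi_i|$ (for bipartite states $\Delta$ is with respect to the product basis). With $\Delta_A=\Delta\otimes\mathrm{id}_B$ dephasing only system $A$ in its basis, the IQ coherence of assistance is $C^{A|B}_a(\rho_{AB})=\max\sum_ip_iS(\Delta_A(|\psi_i\rangle\langle\psi_i|_{AB}))$ over all pure-state decompositions $\rho_{AB}=\sum_ip_i|\psi_i\rangle\langle\psi_i|_{AB}$. The entanglement of assistance is $E_a(\rho_{AB})=\max\sum_ip_iS(\mathrm{Tr}_A|\psi_i\rangle\langle\psi_i|_{AB})$ over all pure-state decompositions of $\rho_{AB}$. *)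

(* Defs.v *)
From HB Require Import structures.
From mathcomp Require Import all_boot all_order all_algebra.
From mathcomp Require Import classical_sets reals exp.
From mathcomp Require Import complex mxtens.

Set Implicit Arguments.
Unset Strict Implicit.
Unset Printing Implicit Defensive.

Import Order.TTheory GRing.Theory Num.Theory.
Local Open Scope ring_scope.

Section Quantum.
Variable R : realType.
Local Notation C := (R[i]).

Definition adj (p q : nat) (A : 'M[C]_(p, q)) : 'M[C]_(q, p) :=
  (map_mx Num.conj A)^T.

Definition psdmx (d : nat) (A : 'M[C]_d) : Prop :=
  forall v : 'cV[C]_d, 0 <= (adj v *m A *m v) 0 0.

Definition density (d : nat) (rho : 'M[C]_d) : Prop :=
  [/\ adj rho = rho, psdmx rho & \tr rho = 1].

Definition spectrum (d : nat) (A : 'M[C]_d) : seq C :=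
  sval (closed_field_poly_normal (char_poly A)).

(* von Neumann entropy S(rho) = - Tr rho ln rho = - sum_k l_k ln l_k
   (natural logarithm; 0 ln 0 = 0) *)
Definition vN_entropy (d : nat) (A : 'M[C]_d) : R :=
  - \sum_(z <- spectrum A) (complex.Re z * ln (complex.Re z)).

Definition proj (d : nat) (psi : 'cV[C]_d) : 'M[C]_d := psi *m adj psi.

Definition pure_decomp (d k : nat) (rho : 'M[C]_d) (p : 'I_k -> R)
    (psi : 'I_k -> 'cV[C]_d) : Prop :=
  [/\ forall i, 0 <= p i,
      \sum_(i < k) p i = 1,
      forall i, adj (psi i) *m psi i = 1
    & rho = \sum_(i < k) (Complex (p i) 0) *: proj (psi i)].

(* max over all pure-state decompositions of sum_i p_i f(psi_i)
   (written as a supremum; the maximum is attained) *)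
Definition assist (d : nat) (f : 'cV[C]_d -> R) (rho : 'M[C]_d) : R :=
  sup [set x : R | exists (k : nat) (p : 'I_k -> R) (psi : 'I_k -> 'cV[C]_d),
                     pure_decomp rho p psi /\ x = \sum_(i < k) p i * f (psi i)].

Definition dephase (d : nat) (A : 'M[C]_d) : 'M[C]_d :=
  \matrix_(i, j) (if i == j then A i j else 0).

(* Bipartite system: H_A (dim m) ⊗ H_B (dim n), product basis |i>|j> indexed
   by mxtens_index (i, j) = i * n + j (Kronecker ordering). *)
Definition dephaseA (m n : nat) (A : 'M[C]_(m * n)) : 'M[C]_(m * n) :=
  \matrix_(k, l) (if (mxtens_unindex k).1 == (mxtens_unindex l).1
                  then A k l else 0).

Definition ptraceA (m n : nat) (A : 'M[C]_(m * n)) : 'M[C]_n :=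
  \matrix_(j, j') \sum_(i < m) A (mxtens_index (i, j)) (mxtens_index (i, j')).

Definition ptraceB (m n : nat) (A : 'M[C]_(m * n)) : 'M[C]_m :=
  \matrix_(i, i') \sum_(j < n) A (mxtens_index (i, j)) (mxtens_index (i', j)).

Definition Coh_a (d : nat) (rho : 'M[C]_d) : R :=
  assist (fun psi => vN_entropy (dephase (proj psi))) rho.

Definition CohIQ_a (m n : nat) (rho : 'M[C]_(m * n)) : R :=
  assist (fun psi => vN_entropy (dephaseA (proj psi))) rho.

Definition Ent_a (m n : nat) (rho : 'M[C]_(m * n)) : R :=
  assist (fun psi => vN_entropy (ptraceA (proj psi))) rho.

End Quantum.

(* Main.v *)
Require Import Defs.
From HB Require Import structures.
From mathcomp Require Import all_boot all_order all_algebra.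
From mathcomp Require Import classical_sets reals exp.
From mathcomp Require Import complex mxtens spectral sesquilinear.
From mathcomp Require Import ring lra boolp.
Import Order.TTheory GRing.Theory Num.Theory.
Set Implicit Arguments.
Unset Strict Implicit.
Unset Printing Implicit Defensive.
Local Open Scope ring_scope.
Section T.
Variable R : realType.
Local Notation C := (R[i]).

Definition n2 (z : C) : R := complex.Re (z * Num.conj z).
Lemma n2E (z : C) : z * Num.conj z = Complex (n2 z) 0.
Proof. case: z => a b /=; rewrite /n2 /=. congr Complex. ring. Qed.
Lemma n2_ge0 (z : C) : 0 <= n2 z.
Proof. case: z => a b; rewrite /n2 /=. rewrite mulrN opprK. by rewrite addr_ge0 // -expr2 sqr_ge0. Qed.

Definition Hs (s : seq C) : R := - \sum_(z <- s) complex.Re z * ln (complex.Re z).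

Lemma spectrum_perm d (A : 'M[C]_d) s :
  char_poly A = \prod_(z <- s) ('X - z%:P) -> perm_eq (spectrum A) s.
Proof.
move=> HA; rewrite /spectrum; case: closed_field_poly_normal => r /= Hr.
apply: prod_XsubC_eq; rewrite -HA [RHS]Hr.
by rewrite (monicP (char_poly_monic A)) scale1r.
Qed.

Lemma Hs_perm s t : perm_eq s t -> Hs s = Hs t.
Proof. by move=> st; rewrite /Hs (perm_big _ st). Qed.

Lemma Hs_cat0 s k : Hs (s ++ nseq k 0) = Hs s.
Proof.
rewrite /Hs big_cat /= [X in _ + X]big1_seq ?addr0 // => z /andP [_].
by move/nseqP => [-> _]; rewrite /= mul0r.
Qed.

Lemma vN_trig d (A : 'M[C]_d) : is_trig_mx A ->
  vN_entropy A = - \sum_(i < d) complex.Re (A i i) * ln (complex.Re (A i i)).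
Proof.
move=> tA; rewrite /vN_entropy -/(Hs _).
rewrite (Hs_perm (@spectrum_perm _ A [seq A i i | i <- enum 'I_d] _)).
  by rewrite /Hs big_map big_enum.
by rewrite char_poly_trig // big_map big_enum.
Qed.

Lemma sylvester p q (A : 'M[C]_(p, q)) (B : 'M[C]_(q, p)) :
  'X^q * char_poly (A *m B) = 'X^p * char_poly (B *m A).
Proof.
set a := map_mx polyC A; set b := map_mx polyC B.
have hAB : char_poly_mx (A *m B) = 'X%:M - a *m b by rewrite /char_poly_mx map_mxM.
have hBA : char_poly_mx (B *m A) = 'X%:M - b *m a by rewrite /char_poly_mx map_mxM.
pose M := block_mx ('X%:M : 'M_p) a b (1%:M : 'M_q).
have h1 : \det M = char_poly (A *m B).
  have := det_mulmx (block_mx (1%:M : 'M_p) (- a) 0 (1%:M : 'M_q)) M.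
  rewrite det_ublock !det1 !mul1r => <-.
  rewrite mulmx_block !mul1mx !mul0mx !add0r !mulmx1 subrr.
  by rewrite det_lblock det1 mulr1 /char_poly hAB mulNmx.
have h2 : \det (block_mx (1%:M : 'M_p) 0 (- b) ('X%:M : 'M_q) *m M) = 'X^p * char_poly (B *m A).
  rewrite mulmx_block !mul1mx !mul0mx !addr0 ?add0r mulmx1.
  rewrite (_ : - b *m 'X%:M + 'X%:M *m b = 0); last first.
    by rewrite mulNmx mul_scalar_mx mul_mx_scalar addNr.
  rewrite det_ublock det_scalar /char_poly hBA mulNmx.
  by rewrite addrC.
move: h2; rewrite det_mulmx det_lblock det1 mul1r det_scalar h1 => <-.
by [].
Qed.


Lemma char_spec d (A : 'M[C]_d) : char_poly A = \prod_(z <- spectrum A) ('X - z%:P).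
Proof.
rewrite /spectrum; case: closed_field_poly_normal => r /= Hr.
by rewrite [LHS]Hr (monicP (char_poly_monic A)) scale1r.
Qed.

Lemma prod_nseq0 k : \prod_(z <- nseq k (0 : C)) ('X - z%:P) = 'X^k.
Proof.
elim: k => [|k IH]; first by rewrite big_nil expr0.
by rewrite /= big_cons IH polyC0 subr0 exprS.
Qed.

Lemma vN_mulC p q (A : 'M[C]_(p, q)) (B : 'M[C]_(q, p)) :
  vN_entropy (A *m B) = vN_entropy (B *m A).
Proof.
rewrite /vN_entropy -!/(Hs _) -(Hs_cat0 _ q) -[RHS](Hs_cat0 _ p).
apply: Hs_perm; apply: prod_XsubC_eq.
rewrite !big_cat /= !prod_nseq0 -!char_spec.
by rewrite mulrC sylvester mulrC.
Qed.


Definition h (x : R) : R := x * ln x.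

Lemma h0 : h 0 = 0. Proof. by rewrite /h mul0r. Qed.

Lemma ln_le_sub1 (y : R) : 0 < y -> ln y <= y - 1.
Proof.
move=> y0; have := @le_ln1Dx R (y - 1).
rewrite [1 + _]addrC subrK; apply; lra.
Qed.

Lemma h_ge (x : R) : - 1 <= h x.
Proof.
rewrite /h; have [x0|x0] := leP x 0; first by rewrite ln0 // mulr0 lerN10.
have : ln (x^-1) <= x^-1 - 1 by apply: ln_le_sub1; rewrite invr_gt0.
rewrite lnV ?posrE // => H.
have : x * (- ln x) <= x * (x^-1 - 1) by rewrite ler_wpM2l // ltW.
rewrite mulrBr divff ?gt_eqF // mulr1 mulrN => H2.
have : 1 - x <= 1 by rewrite lerBlDr lerDl ltW.
lra.
Qed.

Lemma h_le0 (x : R) : 0 <= x <= 1 -> h x <= 0.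
Proof. by case/andP => x0 x1; rewrite /h mulr_ge0_le0 // ln_le0. Qed.

Lemma chain_one b (P : 'I_b -> R) : (forall j, 0 <= P j) ->
  \sum_j h (P j) = h (\sum_j P j) + (\sum_j P j) * \sum_j h (P j / \sum_j P j).
Proof.
move=> P0; set s := \sum_j P j.
have s0 : 0 <= s by apply: sumr_ge0.
have [s_eq0|s_gt0] := eqVneq s 0.
  have Pz : forall j, P j = 0.
    by move=> j; move/eqP: s_eq0; rewrite psumr_eq0 // => /allP /(_ j) /=; rewrite mem_index_enum => /(_ isT) /eqP.
  by rewrite s_eq0 mul0r addr0 h0; apply: big1 => j _; rewrite Pz h0.
have sp : 0 < s by rewrite lt_def s_gt0 s0.
rewrite mulr_sumr.
rewrite [X in _ = _ + X](eq_bigr (fun j => h (P j) - P j * ln s)); last first.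
  move=> j _; rewrite /h mulrA mulrCA divff // mulr1.
  have [Pj0|Pjn] := eqVneq (P j) 0; first by rewrite Pj0 !mul0r subr0.
  have Pjp : 0 < P j by rewrite lt_def Pjn P0.
  by rewrite ln_div ?posrE // mulrBr.
by rewrite sumrB -mulr_suml /h addrC subrK.
Qed.

Lemma chain a b (P : 'I_a -> 'I_b -> R) : (forall i j, 0 <= P i j) ->
  \sum_i \sum_j h (P i j) =
  \sum_i h (\sum_j P i j) + \sum_i (\sum_j P i j) * \sum_j h (P i j / \sum_j P i j).
Proof.
move=> P0; rewrite -big_split /=; apply: eq_bigr => i _; exact: chain_one.
Qed.

Lemma marginal a b (P : 'I_a -> 'I_b -> R) : (forall i j, 0 <= P i j) ->
  \sum_i \sum_j h (P i j) <= \sum_j h (\sum_i P i j).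
Proof.
move=> P0; rewrite exchange_big /=; apply: ler_sum => j _.
rewrite /h mulr_suml; apply: ler_sum => i _.
have [Pj0|Pjn] := eqVneq (P i j) 0; first by rewrite Pj0 !mul0r.
have Pjp : 0 < P i j by rewrite lt_def Pjn P0.
have le : P i j <= \sum_i0 P i0 j.
  by rewrite (bigD1 i) //= lerDl sumr_ge0.
apply: ler_wpM2l; first exact: ltW.
by rewrite ler_ln ?posrE //; exact: lt_le_trans le.
Qed.


Lemma sumC I (r : seq I) (P : pred I) (f : I -> R) :
  \sum_(i <- r | P i) (Complex (f i) 0 : C) = Complex (\sum_(i <- r | P i) f i) 0.
Proof.
elim/big_rec2: _ => //= i x y _ ->.
by rewrite /GRing.add /= addr0.
Qed.

Lemma ReC (x : R) : complex.Re (Complex x 0 : C) = x. Proof. by []. Qed.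

Lemma CM (x y : R) : (Complex x 0 : C) * Complex y 0 = Complex (x * y) 0.
Proof. by rewrite /GRing.mul /= !mulr0 !mul0r subr0 addr0. Qed.

Lemma n2M (c : R) (z : C) : n2 (Complex c 0 * z) = c ^+ 2 * n2 z.
Proof. case: z => a b; rewrite /n2 /=. ring. Qed.

Lemma conjC_real (x : R) : Num.conj (Complex x 0 : C) = Complex x 0.
Proof. by rewrite -[LHS]/(Complex x (- 0)) oppr0. Qed.

Lemma adjE p q (A : 'M[C]_(p, q)) i j : adj A i j = Num.conj (A j i).
Proof. by rewrite /adj !mxE. Qed.

Lemma projE d (v : 'cV[C]_d) i j : proj v i j = v i 0 * Num.conj (v j 0).
Proof. by rewrite /proj !mxE big_ord1 adjE. Qed.

Lemma adj_vec d (v : 'cV[C]_d) : adj v *m v = (Complex (\sum_j n2 (v j 0)) 0)%:M.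
Proof.
apply/matrixP => a b; rewrite !ord1 !mxE /= mulr1n -sumC.
by apply: eq_bigr => j _; rewrite adjE mulrC n2E.
Qed.


Definition nsum d (v : 'cV[C]_d) : R := \sum_j n2 (v j 0).

Lemma nsum_ge0 d (v : 'cV[C]_d) : 0 <= nsum v.
Proof. by apply: sumr_ge0 => j _; apply: n2_ge0. Qed.

Definition unitize d (j0 : 'I_d) (v : 'cV[C]_d) : 'cV[C]_d :=
  if nsum v == 0 then delta_mx j0 0
  else Complex (Num.sqrt (nsum v))^-1 0 *: v.

Lemma n2_unitize d j0 (v : 'cV[C]_d) j : nsum v != 0 ->
  n2 (unitize j0 v j 0) = n2 (v j 0) / nsum v.
Proof.
move=> nz; rewrite /unitize (negbTE nz) mxE n2M exprVn sqr_sqrtr ?nsum_ge0 //.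
by rewrite mulrC.
Qed.

Lemma unitize_unit d j0 (v : 'cV[C]_d) : adj (unitize j0 v) *m unitize j0 v = 1.
Proof.
rewrite adj_vec; case: (eqVneq (nsum v) 0) => [z|nz].
  rewrite /unitize z eqxx (bigD1 j0) //= big1 ?addr0.
    by rewrite mxE !eqxx /n2 /= oppr0 mulr0 subr0 mulr1.
  by move=> j jn; rewrite mxE (negbTE jn) /n2 /= !mul0r subrr.
rewrite (eq_bigr (fun j => n2 (v j 0) / nsum v)); last by move=> j _; rewrite n2_unitize.
by rewrite -mulr_suml -/(nsum v) divff.
Qed.

Lemma n2_eq0 (z : C) : n2 z = 0 -> z = 0.
Proof.
case: z => a b; rewrite /n2 /= mulrN opprK => H.
have : (a * a + b * b == 0) = (a * a == 0) && (b * b == 0).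
  by apply: paddr_eq0; rewrite -expr2 sqr_ge0.
rewrite H eqxx => /esym/andP [/eqP a0 /eqP b0].
by move/eqP: a0; rewrite mulf_eq0 orbb => /eqP ->; move/eqP: b0; rewrite mulf_eq0 orbb => /eqP ->.
Qed.

Lemma proj_unitize d j0 (v : 'cV[C]_d) :
  Complex (nsum v) 0 *: proj (unitize j0 v) = proj v.
Proof.
case: (eqVneq (nsum v) 0) => [z|nz].
  have v0 : forall j, v j 0 = 0.
    move=> j; apply: n2_eq0; move/eqP: z; rewrite /nsum psumr_eq0; last by move=> i _; apply: n2_ge0.
    by move/allP/(_ j); rewrite mem_index_enum => /(_ isT) /eqP.
  rewrite z; apply/matrixP => i j; rewrite mxE !projE !v0 mul0r.
  by rewrite mul0r.
apply/matrixP => i j; rewrite mxE !projE /unitize (negbTE nz) !mxE rmorphM /= conjC_real.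
rewrite mulrACA (CM (Num.sqrt (nsum v))^-1 (Num.sqrt (nsum v))^-1) mulrA.
set s' := (Num.sqrt (nsum v))^-1.
have kc : (Complex (nsum v) 0 : C) * Complex (s' * s') 0 = 1.
  by rewrite CM /s' -expr2 exprVn sqr_sqrtr ?nsum_ge0 // divff.
transitivity (((Complex (nsum v) 0 : C) * Complex (s' * s') 0) * (v i 0 * Num.conj (v j 0))).
  by rewrite !mulrA.
by rewrite kc mul1r.
Qed.


Lemma vN_diag d (A : 'M[C]_d) (x : 'I_d -> R) :
  (forall i j, A i j = if i == j then Complex (x i) 0 else 0) ->
  vN_entropy A = - \sum_i h (x i).
Proof.
move=> HA; rewrite vN_trig.
  by congr (- _); apply: eq_bigr => i _; rewrite HA eqxx.
apply/is_trig_mxP => i j lt; rewrite HA; case: eqP => // eij.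
by move: lt; rewrite eij ltnn.
Qed.

Lemma vN_coh d (v : 'cV[C]_d) :
  vN_entropy (dephase (proj v)) = - \sum_k h (n2 (v k 0)).
Proof.
apply: vN_diag => i j; rewrite /dephase mxE projE.
by case: eqP => // ->; rewrite n2E.
Qed.

Lemma size_spectrum d (A : 'M[C]_d) : size (spectrum A) = d.
Proof.
have := size_char_poly A; rewrite char_spec size_prod_XsubC.
by case.
Qed.

Lemma vN_le d (A : 'M[C]_d) : vN_entropy A <= d%:R.
Proof.
rewrite /vN_entropy -sumrN -[X in _ <= X%:R](size_spectrum A).
elim: (spectrum A) => [|z s IH]; first by rewrite big_nil.
rewrite big_cons /= -add1n natrD lerD //.
by rewrite lerNl; apply: h_ge.
Qed.

Lemma sum_tens (V : nmodType) m n (F : 'I_(m * n) -> V) :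
  \sum_k F k = \sum_i \sum_j F (mxtens_index (i, j)).
Proof.
rewrite (reindex (@mxtens_index m n)) /=; last first.
  by exists (@mxtens_unindex m n) => x _; [apply: mxtens_indexK | apply: mxtens_unindexK].
by rewrite pair_big /=; apply: eq_bigr => [[i j]] _.
Qed.

Definition AS d (f : 'cV[C]_d -> R) (rho : 'M[C]_d) : set R :=
  [set x : R | exists (k : nat) (p : 'I_k -> R) (psi : 'I_k -> 'cV[C]_d),
                     pure_decomp rho p psi /\ x = \sum_(i < k) p i * f (psi i)].

Lemma assistE d (f : 'cV[C]_d -> R) rho : assist f rho = sup (AS f rho).
Proof. by []. Qed.

Lemma glue d K J (q : 'I_K -> R) (mu : 'I_K -> 'I_J -> R)
   (phi : 'I_K -> 'I_J -> 'cV[C]_d) (sigma : 'M[C]_d) (f : 'cV[C]_d -> R) :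
  (forall k, 0 <= q k) -> \sum_k q k = 1 ->
  (forall k j, 0 <= mu k j) -> (forall k, \sum_j mu k j = 1) ->
  (forall k j, adj (phi k j) *m phi k j = 1) ->
  sigma = \sum_k Complex (q k) 0 *: \sum_j Complex (mu k j) 0 *: proj (phi k j) ->
  AS f sigma (\sum_k q k * \sum_j mu k j * f (phi k j)).
Proof.
move=> q0 q1 mu0 mu1 un Hs.
pose p (l : 'I_(K * J)) := q (mxtens_unindex l).1 * mu (mxtens_unindex l).1 (mxtens_unindex l).2.
pose psi (l : 'I_(K * J)) := phi (mxtens_unindex l).1 (mxtens_unindex l).2.
exists (K * J)%N, p, psi; split; last first.
  rewrite sum_tens; apply: eq_bigr => k _; rewrite mulr_sumr; apply: eq_bigr => j _.
  by rewrite /p /psi mxtens_indexK /= mulrA.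
split.
- by move=> l; rewrite /p mulr_ge0.
- rewrite sum_tens -[RHS]q1; apply: eq_bigr => k _.
  rewrite -[RHS]mulr1 -(mu1 k) mulr_sumr; apply: eq_bigr => j _.
  by rewrite /p mxtens_indexK.
- by move=> l; apply: un.
rewrite Hs sum_tens; apply: eq_bigr => k _; rewrite scaler_sumr; apply: eq_bigr => j _.
by rewrite /p /psi mxtens_indexK /= scalerA CM.
Qed.

Lemma sup_le_add (E F G : set R) : has_ubound F -> has_ubound G ->
  (forall x, E x -> exists y z, F y /\ G z /\ x <= y + z) -> (E !=set0)%classic ->
  sup E <= sup F + sup G.
Proof.
move=> uF uG H ne; apply: ge_sup => // x Ex.
have [y [z [Fy [Gz le]]]] := H x Ex.
apply: (le_trans le); apply: lerD; apply: sup_upper_bound => //; split => //.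
- by exists y.
- by exists z.
Qed.

Lemma sup_ge0 (E : set R) : has_ubound E -> (forall x, E x -> 0 <= x) -> 0 <= sup E.
Proof.
move=> uE H; have [[x Ex]|ne] := pselect (E !=set0)%classic.
  by apply: le_trans (H x Ex) _; apply: sup_upper_bound => //; split => //; exists x.
by rewrite sup_out // => -[].
Qed.


Lemma conjC0 : Num.conj (0 : C) = 0. Proof. exact: rmorph0. Qed.

Lemma vN_IQ m n (psi : 'cV[C]_(m * n)) :
  vN_entropy (dephaseA (proj psi)) =
  - \sum_i h (\sum_j n2 (psi (mxtens_index (i, j)) 0)).
Proof.
pose W : 'M[C]_(m * n, m) :=
  \matrix_(k, i) (if (mxtens_unindex k).1 == i then psi k 0 else 0).
have e1 : dephaseA (proj psi) = W *m adj W.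
  apply/matrixP => k l; rewrite /dephaseA mxE projE mxE.
  rewrite (bigD1 (mxtens_unindex k).1) //= big1 ?addr0; last first.
    by move=> i /negbTE ni; rewrite adjE !mxE eq_sym ni mul0r.
  rewrite adjE !mxE eqxx [(mxtens_unindex l).1 == _]eq_sym.
  by case: eqP => _ //; rewrite conjC0 mulr0.
rewrite e1 vN_mulC; apply: vN_diag => i i'.
rewrite !mxE sum_tens (bigD1 i) //= [X in _ + X]big1 ?addr0; last first.
  move=> i0 ni; have {}ni : (i0 == i) = false by apply/negbTE. apply: big1 => j _.
  by rewrite adjE !mxE mxtens_indexK /= ni conjC0 mul0r.
rewrite -sumC; case: eqP => [<-|ne].
  by apply: eq_bigr => j _; rewrite adjE !mxE mxtens_indexK /= eqxx mulrC n2E.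
apply: big1 => j _; rewrite adjE !mxE mxtens_indexK /= eqxx.
case: eqP => e. by case: ne. by rewrite mulr0.
Qed.


Definition rowvec m n (psi : 'cV[C]_(m * n)) (i : 'I_m) : 'cV[C]_n :=
  \col_j psi (mxtens_index (i, j)) 0.

Lemma nsum_rowvec m n (psi : 'cV[C]_(m * n)) i :
  nsum (rowvec psi i) = \sum_j n2 (psi (mxtens_index (i, j)) 0).
Proof. by apply: eq_bigr => j _; rewrite mxE. Qed.

Lemma ptraceA_proj m n (psi : 'cV[C]_(m * n)) :
  ptraceA (proj psi) = \sum_i proj (rowvec psi i).
Proof.
apply/matrixP => j j'; rewrite /ptraceA mxE summxE; apply: eq_bigr => i _.
by rewrite !projE !mxE.
Qed.

Lemma pure2 m n (j0 : 'I_n) (psi : 'cV[C]_(m * n)) :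
  vN_entropy (dephase (proj psi)) = vN_entropy (dephaseA (proj psi)) +
  \sum_i nsum (rowvec psi i) * vN_entropy (dephase (proj (unitize j0 (rowvec psi i)))).
Proof.
rewrite vN_coh vN_IQ sum_tens.
rewrite (chain (P := fun i j => n2 (psi (mxtens_index (i, j)) 0)) (fun i j => n2_ge0 _)).
rewrite opprD; congr (_ + _); rewrite -sumrN; apply: eq_bigr => i _.
rewrite nsum_rowvec vN_coh.
have [z|nz] := eqVneq (\sum_j n2 (psi (mxtens_index (i, j)) 0)) 0.
  by rewrite z !mul0r oppr0.
rewrite mulrN; congr (- (_ * _)); apply: eq_bigr => j _.
by rewrite n2_unitize nsum_rowvec ?mxE.
Qed.


Lemma adjK p q (A : 'M[C]_(p, q)) : adj (adj A) = A.
Proof. by apply/matrixP => i j; rewrite !adjE conjCK. Qed.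

Lemma adj_mul p q r (A : 'M[C]_(p, q)) (B : 'M[C]_(q, r)) :
  adj (A *m B) = adj B *m adj A.
Proof.
apply/matrixP => i j; rewrite adjE !mxE rmorph_sum; apply: eq_bigr => k _.
by rewrite rmorphM !adjE mulrC.
Qed.

Lemma adj_tc p q (A : 'M[C]_(p, q)) : adj A = (A ^t* )%sesqui.
Proof. by apply/matrixP => i j; rewrite adjE !mxE. Qed.

Lemma herm_decomp d (Hm : 'M[C]_d) : adj Hm = Hm ->
  exists (P : 'M[C]_d) (e : 'rV[C]_d),
    [/\ P *m adj P = 1, adj P *m P = 1 & Hm = adj P *m diag_mx e *m P].
Proof.
move=> hH.
have nm : Hm \is normalmx.
  apply/normalmxP. rewrite -adj_tc hH. by [].
have /orthomx_spectralP HP := nm.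
have U := spectral_unitarymx Hm.
have PP : spectralmx Hm *m adj (spectralmx Hm) = 1.
  rewrite adj_tc. apply/unitarymxP. exact: U.
exists (spectralmx Hm), (spectral_diag Hm); split => //.
- by apply: mulmx1C.
- by rewrite adj_tc -invmx_unitary.
Qed.

Lemma nsum_unit d (v : 'cV[C]_d) : adj v *m v = 1 -> nsum v = 1.
Proof.
rewrite adj_vec => /matrixP /(_ 0 0); rewrite !mxE /= mulr1n.
by move=> -[].
Qed.

Lemma pure1 m n (i0 : 'I_m) (psi : 'cV[C]_(m * n)) :
  exists (mu : 'I_n -> R) (phi : 'I_n -> 'cV[C]_m),
  [/\ forall j, 0 <= mu j,
      \sum_j mu j = nsum psi,
      forall j, adj (phi j) *m phi j = 1,
      ptraceB (proj psi) = \sum_j Complex (mu j) 0 *: proj (phi j)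
    & vN_entropy (dephaseA (proj psi)) <=
      vN_entropy (ptraceA (proj psi)) + \sum_j mu j * vN_entropy (dephase (proj (phi j)))].
Proof.
pose B : 'M[C]_(n, m) := \matrix_(j, i) psi (mxtens_index (i, j)) 0.
have hB : ptraceA (proj psi) = B *m adj B.
  apply/matrixP => j j'; rewrite /ptraceA !mxE; apply: eq_bigr => i _.
  by rewrite projE adjE !mxE.
have hH : adj (B *m adj B) = B *m adj B by rewrite adj_mul adjK.
have [P [e [PP1 PP2 HPe]]] := herm_decomp hH.
pose G := P *m B.
have hGG : G *m adj G = diag_mx e.
  rewrite /G adj_mul !mulmxA -[P *m B *m adj B]mulmxA HPe !mulmxA PP1 mul1mx.
  by rewrite -mulmxA PP1 mulmx1.
pose mu j := \sum_i n2 (G j i).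
have he : forall j, e 0 j = Complex (mu j) 0.
  move=> j; have /matrixP/(_ j j) := hGG; rewrite !mxE eqxx mulr1n => <-.
  by rewrite -sumC; apply: eq_bigr => i _; rewrite adjE n2E.
have vNH : vN_entropy (ptraceA (proj psi)) = - \sum_j h (mu j).
  rewrite hB HPe -mulmxA vN_mulC -mulmxA PP1 mulmx1.
  apply: vN_diag => j j'; rewrite !mxE he.
  by case: eqP => _; rewrite ?mulr1n ?mulr0n.
pose a j : 'cV[C]_m := \col_i G j i.
have hB2 : B = adj P *m G by rewrite /G mulmxA PP2 mul1mx.
have hBB : adj B *m B = adj G *m G.
  by rewrite hB2 adj_mul adjK !mulmxA -[adj G *m P *m adj P]mulmxA PP1 mulmx1.
have hptB : ptraceB (proj psi) = \sum_j proj (a j).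
  apply/matrixP => i i'; rewrite /ptraceB !mxE summxE.
  have /matrixP/(_ i' i) := hBB; rewrite !mxE => E.
  transitivity (\sum_j B j i * Num.conj (B j i')).
    by apply: eq_bigr => j _; rewrite projE !mxE.
  transitivity (\sum_j G j i * Num.conj (G j i')).
    rewrite (eq_bigr (fun j => adj B i' j * B j i)); last by move=> j _; rewrite adjE mulrC.
    by rewrite E; apply: eq_bigr => j _; rewrite adjE mulrC.
  by apply: eq_bigr => j _; rewrite projE !mxE.
have hnu : forall i, \sum_j n2 (psi (mxtens_index (i, j)) 0) = \sum_j n2 (G j i).
  move=> i; have /matrixP/(_ i i) := hptB.
  rewrite /ptraceB mxE summxE.
  rewrite (eq_bigr (fun j => Complex (n2 (psi (mxtens_index (i, j)) 0)) 0)); last first.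
    by move=> j _; rewrite projE n2E.
  rewrite [X in _ = X -> _](eq_bigr (fun j : 'I_n => Complex (n2 (G j i)) 0)); last first.
    by move=> j _; rewrite projE !mxE n2E.
  by rewrite !sumC => -[].
have nsa : forall j, nsum (a j) = mu j by move=> j; apply: eq_bigr => i _; rewrite mxE.
exists mu, (fun j => unitize i0 (a j)); split.
- by move=> j; apply: sumr_ge0 => i _; apply: n2_ge0.
- rewrite /nsum sum_tens /mu exchange_big /=; apply: eq_bigr => i _.
  by rewrite hnu.
- by move=> j; apply: unitize_unit.
- by rewrite hptB; apply: eq_bigr => j _; rewrite -nsa proj_unitize.
rewrite vN_IQ vNH.
rewrite (eq_bigr (fun i => h (\sum_j n2 (G j i)))); last by move=> i _; rewrite hnu.
have Q0 : forall j i, 0 <= n2 (G j i) by move=> j i; apply: n2_ge0.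
have := marginal (P := fun j i => n2 (G j i)) Q0.
rewrite (chain (P := fun j i => n2 (G j i)) Q0) -/mu => H.
rewrite -lerN2 opprK opprD opprK.
apply: le_trans H; rewrite lerD2l -sumrN.
apply: ler_sum => j _; rewrite vN_coh.
rewrite -/(mu j); have [z|nz] := eqVneq (mu j) 0; first by rewrite z !mul0r oppr0.
rewrite mulrN opprK (eq_bigr (fun i => h (n2 (G j i) / mu j))) // => i _.
by rewrite n2_unitize nsa ?mxE.
Qed.


Lemma ptraceBE m n (A : 'M[C]_(m * n)) i i' :
  ptraceB A i i' = \sum_j A (mxtens_index (i, j)) (mxtens_index (i', j)).
Proof. by rewrite /ptraceB mxE. Qed.

Lemma ptraceAE m n (A : 'M[C]_(m * n)) j j' :
  ptraceA A j j' = \sum_i A (mxtens_index (i, j)) (mxtens_index (i, j')).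
Proof. by rewrite /ptraceA mxE. Qed.

Lemma ptraceB_sum m n K (c : 'I_K -> C) (A : 'I_K -> 'M[C]_(m * n)) :
  ptraceB (\sum_k c k *: A k) = \sum_k c k *: ptraceB (A k).
Proof.
apply/matrixP => i i'; rewrite ptraceBE summxE.
rewrite (eq_bigr (fun j => \sum_k c k * A k (mxtens_index (i, j)) (mxtens_index (i', j)))); last first.
  by move=> j _; rewrite summxE; apply: eq_bigr => k _; rewrite mxE.
rewrite exchange_big /=; apply: eq_bigr => k _; rewrite mxE ptraceBE mulr_sumr.
by [].
Qed.

Lemma ptraceA_sum m n K (c : 'I_K -> C) (A : 'I_K -> 'M[C]_(m * n)) :
  ptraceA (\sum_k c k *: A k) = \sum_k c k *: ptraceA (A k).
Proof.
apply/matrixP => j j'; rewrite ptraceAE summxE.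
rewrite (eq_bigr (fun i => \sum_k c k * A k (mxtens_index (i, j)) (mxtens_index (i, j')))); last first.
  by move=> i _; rewrite summxE; apply: eq_bigr => k _; rewrite mxE.
rewrite exchange_big /=; apply: eq_bigr => k _; rewrite mxE ptraceAE mulr_sumr.
by [].
Qed.

Lemma AS_ub d D (g : 'cV[C]_d -> 'M[C]_D) sigma :
  has_ubound (AS (fun psi => vN_entropy (g psi)) sigma).
Proof.
exists D%:R => x [k [p [psi [[p0 p1 _ _] ->]]]].
have <- : \sum_i p i * D%:R = D%:R by rewrite -mulr_suml p1 mul1r.
apply: ler_sum => i _; apply: ler_wpM2l => //; apply: vN_le.
Qed.

Lemma AS_coh_ge0 d (sigma : 'M[C]_d) x :
  AS (fun psi => vN_entropy (dephase (proj psi))) sigma x -> 0 <= x.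
Proof.
move=> [k [p [psi [[p0 p1 un _] ->]]]].
apply: sumr_ge0 => i _; apply: mulr_ge0 => //.
rewrite vN_coh oppr_ge0; apply: sumr_le0 => j _; apply: h_le0.
rewrite n2_ge0 /= -(nsum_unit (un i)) /nsum (bigD1 j) //= lerDl.
by apply: sumr_ge0 => l _; apply: n2_ge0.
Qed.

Lemma AS_ne d (f g : 'cV[C]_d -> R) sigma :
  (AS f sigma !=set0)%classic -> (AS g sigma !=set0)%classic.
Proof.
by move=> [x [k [p [psi [pd _]]]]]; exists (\sum_i p i * g (psi i)), k, p, psi.
Qed.

End T.

Theorem theorem2 (R : realType) (m n : nat) (rho : 'M[R[i]]_(m * n)) :
  density rho ->
  [/\ CohIQ_a rho <= Coh_a (ptraceB rho) + Ent_a rho,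
      Coh_a rho <= CohIQ_a rho + Coh_a (ptraceA rho)
    & Coh_a rho <= Coh_a (ptraceB rho) + Coh_a (ptraceA rho) + Ent_a rho].
Proof.
move=> [hadj hpsd htr].
have mn0 : (0 < m * n)%N.
  case: (posnP (m * n)) => // e; move: htr; rewrite /mxtrace.
  suff -> : \sum_i rho i i = 0 by move/eqP; rewrite eq_sym oner_eq0.
  by apply: big1 => i _; have := ltn_ord i; rewrite [X in (_ < X)%N]e.
have m0 : (0 < m)%N by move: mn0; rewrite muln_gt0 => /andP [].
have n0 : (0 < n)%N by move: mn0; rewrite muln_gt0 => /andP [].
pose i0 : 'I_m := Ordinal m0.
pose j0 : 'I_n := Ordinal n0.
rewrite /CohIQ_a /Coh_a /Ent_a !assistE.
set EC := AS (fun psi => vN_entropy (dephase (proj psi))) rho.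
set EIQ := AS (fun psi => vN_entropy (dephaseA (proj psi))) rho.
set EE := AS (fun psi => vN_entropy (ptraceA (proj psi))) rho.
set EA := AS (fun psi => vN_entropy (dephase (proj psi))) (ptraceB rho).
set EB := AS (fun psi => vN_entropy (dephase (proj psi))) (ptraceA rho).
have uA : has_ubound EA by apply: AS_ub.
have uB : has_ubound EB by apply: AS_ub.
have uIQ : has_ubound EIQ by apply: AS_ub.
have uE : has_ubound EE by apply: AS_ub.
have h1 : sup EIQ <= sup EA + sup EE.
  have [ne|emp] := pselect (EIQ !=set0)%classic; last first.
    have -> : sup EIQ = 0 by rewrite sup_out // => -[].
    have -> : sup EE = 0.
      by rewrite sup_out // => -[neE _]; apply: emp; apply: AS_ne neE.
    by rewrite addr0; apply: sup_ge0 => // x; apply: AS_coh_ge0.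
  apply: sup_le_add => // x [K [q [psi [pd ->]]]]; case: (pd) => q0 q1 un hrho.
  have : forall k, exists mp : ('I_n -> R) * ('I_n -> 'cV[R[i]]_m),
    [/\ forall j, 0 <= mp.1 j,
      \sum_j mp.1 j = nsum (psi k),
      forall j, adj (mp.2 j) *m mp.2 j = 1,
      ptraceB (proj (psi k)) = \sum_j Complex (mp.1 j) 0 *: proj (mp.2 j)
    & vN_entropy (dephaseA (proj (psi k))) <=
      vN_entropy (ptraceA (proj (psi k))) + \sum_j mp.1 j * vN_entropy (dephase (proj (mp.2 j)))].
    by move=> k; have [mu [phi H]] := pure1 i0 (psi k); exists (mu, phi).
  move=> /choice [F HF].
  exists (\sum_k q k * \sum_j (F k).1 j * vN_entropy (dephase (proj ((F k).2 j)))).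
  exists (\sum_k q k * vN_entropy (ptraceA (proj (psi k)))).
  split; [|split].
  - apply: (glue (mu := fun k j => (F k).1 j) (phi := fun k j => (F k).2 j)) => //.
    + by move=> k j; have [] := HF k.
    + by move=> k; have [_ -> _ _ _] := HF k; apply: nsum_unit.
    + by move=> k j; have [] := HF k.
    + rewrite hrho ptraceB_sum; apply: eq_bigr => k _.
      by have [_ _ _ -> _] := HF k.
  - by exists K, q, psi; split.
  - rewrite -big_split /=; apply: ler_sum => k _; rewrite -mulrDr.
    apply: ler_wpM2l => //; have [_ _ _ _ H] := HF k.
    by rewrite addrC.
have h2 : sup EC <= sup EIQ + sup EB.
  have [ne|emp] := pselect (EC !=set0)%classic; last first.
    have -> : sup EC = 0 by rewrite sup_out // => -[].
    have -> : sup EIQ = 0.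
      by rewrite sup_out // => -[neE _]; apply: emp; apply: AS_ne neE.
    by rewrite add0r; apply: sup_ge0 => // x; apply: AS_coh_ge0.
  apply: sup_le_add => // x [K [q [psi [pd ->]]]]; case: (pd) => q0 q1 un hrho.
  exists (\sum_k q k * vN_entropy (dephaseA (proj (psi k)))).
  exists (\sum_k q k * \sum_i nsum (rowvec (psi k) i) *
            vN_entropy (dephase (proj (unitize j0 (rowvec (psi k) i))))).
  split; [|split].
  - by exists K, q, psi; split.
  - apply: (glue (mu := fun k i => nsum (rowvec (psi k) i)) (phi := fun k i => unitize j0 (rowvec (psi k) i))) => //.
    + by move=> k i; apply: nsum_ge0.
    + move=> k; rewrite -(nsum_unit (un k)) [RHS]/nsum sum_tens; apply: eq_bigr => i _.
      by rewrite nsum_rowvec.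
    + by move=> k i; apply: unitize_unit.
    + rewrite hrho ptraceA_sum; apply: eq_bigr => k _.
      by rewrite ptraceA_proj; congr (_ *: _); apply: eq_bigr => i _; rewrite proj_unitize.
  - rewrite -big_split /=; apply: ler_sum => k _; rewrite -mulrDr.
    by rewrite (pure2 j0).
split => //.
by apply: (le_trans h2); rewrite -addrA [sup EB + _]addrC addrA lerD2r.
Qed.
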